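(* Consider the following algorithm for $1\,||\,\sum w_jU_j$: let $d^{(1)}<\cdots<d^{(d_{\#})}$ be the distinct due dates and $J_i=\{j : d_j=d^{(i)}\}$; compute the solution vector $A_i$ of each $J_i$ (viewed as an instance on its own); set $A=A_1$; for $i=2,\ldots,d_{\#}$ set $A=A\oplus A_i$; return $\sum_j w_j - A[d_{\max}]$. This algorithm correctly returns the minimum total weight of tardy jobs.
   Context: In $1\,||\,\sum w_jU_j$ we are given $n$ jobs, job $j$ with processing time $p_j\in\mathbb{N}$, weight $w_j\in\mathbb{N}$, due date $d_j\in\mathbb{N}$; jobs are scheduled non-preemptively on one machine in some order, job $j$ is early if its completion time (sum of processing times of jobs up to and including $j$) is at most $d_j$ and tardy otherwise; the goal is the minimum total weight of tardy jobs. $d_{\max}=\max_j d_j$, $d_{\#}$ is the number of distinct due dates. A subset $S$ of jobs is called a set of early jobs if there is a schedule in which all jobs of $S$ are early. The solution vector of an instance $J$ (with maximum due date $D$) is the integer vector $(A[k])_{k=0}^{D}$ where $A[k]$ is the maximum total weight of a set of early jobs of $J$ with total processing time at most $k$. For integer vectors $A=(A[k])_{k=0}^m$, $B=(B[\ell])_{\ell=0}^{n'}$ with $m\le n'$, the $(\max,+)$-convolution $A\oplus B$ is the vector $(C[\ell])_{\ell=0}^{n'}$ with $C[\ell]=\max_{0\le k\le \ell}(A[k]+B[\ell-k])$ (terms with $k>m$ omitted). *)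

(* Defs.v *)
From mathcomp Require Import all_boot all_order all_fingroup.
Set Implicit Arguments. Unset Strict Implicit. Unset Printing Implicit Defensive.

(* A schedule (of a job set J) is an ordering of the jobs, encoded by a
   permutation sigma of 'I_n: job k precedes job j iff sigma k < sigma j. *)

Definition completion (n : nat) (p : 'I_n -> nat) (J : {set 'I_n})
  (sigma : {perm 'I_n}) (j : 'I_n) : nat :=
  \sum_(k in J | sigma k <= sigma j) p k.

Definition early_set (n : nat) (p d : 'I_n -> nat) (J S : {set 'I_n}) : bool :=
  (S \subset J) &&
  [exists sigma : {perm 'I_n}, [forall j in S, completion p J sigma j <= d j]].

Definition dmax_of (n : nat) (d : 'I_n -> nat) (J : {set 'I_n}) : nat :=
  \max_(j in J) d j.

Definition sol_vec (n : nat) (p w d : 'I_n -> nat) (J : {set 'I_n}) : seq nat :=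
  mkseq (fun k => \max_(S : {set 'I_n} | early_set p d J S && (\sum_(j in S) p j <= k))
                    \sum_(j in S) w j)
        (dmax_of d J).+1.

(* (max,+)-convolution; A has indices 0..size A - 1, B has indices 0..size B - 1,
   intended for size A <= size B; result has the length of B. *)
Definition maxplus_conv (A B : seq nat) : seq nat :=
  mkseq (fun l => \max_(k < l.+1 | k < size A) (nth 0 A k + nth 0 B (l - k)))
        (size B).

Definition distinct_dues (n : nat) (d : 'I_n -> nat) : seq nat :=
  sort leq (undup [seq d j | j <- enum 'I_n]).

Definition jobs_with_due (n : nat) (d : 'I_n -> nat) (dd : nat) : {set 'I_n} :=
  [set j | d j == dd].

Definition algo (n : nat) (p w d : 'I_n -> nat) : nat :=
  let dds := distinct_dues d in
  let Ai := fun dd => sol_vec p w d (jobs_with_due d dd) in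
  let A := foldl (fun A dd => maxplus_conv A (Ai dd)) (Ai (head 0 dds)) (behead dds) in
  \sum_(j : 'I_n) w j - nth 0 A (\max_(j : 'I_n) d j).

Definition tardy_weight (n : nat) (p w d : 'I_n -> nat) (sigma : {perm 'I_n}) : nat :=
  \sum_(j : 'I_n | d j < completion p [set: 'I_n] sigma j) w j.

(* Main.v *)
Require Import Defs.
From mathcomp Require Import all_boot all_order all_fingroup.
From mathcomp Require Import zify.
Set Implicit Arguments. Unset Strict Implicit. Unset Printing Implicit Defensive.

Lemma sum_sub (I : finType) (P Q : pred I) (F : I -> nat) :
  (forall i, P i -> Q i) -> \sum_(i | P i) F i <= \sum_(i | Q i) F i.
Proof.
move=> PQ; rewrite [X in _ <= X](bigID P) /=.
rewrite (eq_bigl P) ?leq_addr // => i; case: (boolP (P i)) => Pi; rewrite ?andbT ?andbF //.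
by rewrite PQ.
Qed.

Definition edd n (p d : 'I_n -> nat) (S : {set 'I_n}) : bool :=
  [forall j in S, \sum_(k in S | d k <= d j) p k <= d j].

Lemma edd_le n (p d : 'I_n -> nat) (S : {set 'I_n}) (D : nat) :
  edd p d S -> \sum_(k in S | d k <= D) p k <= D.
Proof.
move=> /forall_inP H.
case: (pickP [pred k | (k \in S) && (d k <= D)]) => [j0 /= /andP[j0S j0D] | none]; last first.
  by rewrite big_pred0 // => k; have := none k.
case: (@arg_maxnP _ j0 [pred k | (k \in S) && (d k <= D)] d) => /=; first by rewrite j0S.
move=> j /andP[jS jD] jmax.
suff -> : \sum_(k in S | d k <= D) p k = \sum_(k in S | d k <= d j) p k.
  exact: leq_trans (H j jS) jD.
apply: eq_bigl => k; case: (boolP (k \in S)) => kS //=.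
apply/idP/idP => [kD|kj]; first by apply: jmax; rewrite kS.
exact: leq_trans kj jD.
Qed.

Lemma early_edd n (p d : 'I_n -> nat) (J S : {set 'I_n}) (sigma : {perm 'I_n}) :
  S \subset J -> (forall j, j \in S -> completion p J sigma j <= d j) -> edd p d S.
Proof.
move=> SJ H; apply/forall_inP => j jS.
case: (@arg_maxnP _ j [pred k | (k \in S) && (d k <= d j)] (fun k => nat_of_ord (sigma k))) => /=.
  by rewrite jS leqnn.
move=> js /andP[jsS jsD] jsmax.
apply: leq_trans jsD; apply: leq_trans (H _ jsS); rewrite /completion.
apply: sum_sub => k /andP[kS kD]; rewrite (subsetP SJ) //=.
by apply: jsmax; rewrite kS.
Qed.

Lemma edd_sched n (p d : 'I_n -> nat) (S : {set 'I_n}) :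
  edd p d S -> exists sigma : {perm 'I_n},
    forall (J : {set 'I_n}) j, j \in S -> completion p J sigma j <= d j.
Proof.
move=> /forall_inP H.
pose M := (\max_k d k).+1.
have dM : forall k, d k < M by move=> k; rewrite ltnS leq_bigmax.
pose key k := if k \in S then d k else M.
pose key' (k : 'I_n) := key k * n + k.
have key'_mono : forall a b, key a < key b -> key' a < key' b.
  move=> a b ab; rewrite /key'; have := ltn_ord a; have := ltn_ord b; nia.
have key'_inj : forall a b, key' a = key' b -> a = b.
  move=> a b E; apply: val_inj => /=.
  have := congr1 (modn^~ n) E; rewrite /key' !modnMDl !modn_small //.
pose rk j := #|[set k | key' k < key' j]|.
have rk_lt : forall j, rk j < n.
  move=> j; rewrite /rk.
  suff : rk j < #|[set: 'I_n]| by rewrite cardsT card_ord.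
  apply: proper_card; apply/properP; split; first exact: subsetT.
  by exists j; rewrite // inE ltnn.
have rk_mono : forall a b, key' a < key' b -> rk a < rk b.
  move=> a b ab; apply: proper_card; apply/properP; split.
    apply/subsetP => k; rewrite !inE => ka; exact: ltn_trans ka ab.
  by exists a; rewrite !inE ?ltnn.
pose f j : 'I_n := Ordinal (rk_lt j).
have f_inj : injective f.
  move=> a b /(congr1 val) /= E.
  case: (ltngtP (key' a) (key' b)) => [ab|ba|]; last exact: key'_inj.
    by have := rk_mono _ _ ab; rewrite E ltnn.
  by have := rk_mono _ _ ba; rewrite E ltnn.
exists (perm f_inj) => J j jS.
apply: leq_trans (H j jS); rewrite /completion.
apply: sum_sub => k /andP[_]; rewrite !permE /= => kj.
apply/negPn/negP => nk.
have : key j < key k.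
  rewrite /key jS; case: (boolP (k \in S)) nk => kS //=; rewrite -ltnNge //.
move=> /key'_mono /rk_mono; rewrite ltnNge kj //.
Qed.

Lemma early_setE n (p d : 'I_n -> nat) (J S : {set 'I_n}) :
  early_set p d J S = (S \subset J) && edd p d S.
Proof.
rewrite /early_set; case: (boolP (S \subset J)) => SJ //=.
apply/existsP/idP => [[sigma /forall_inP H]|E].
  exact: early_edd SJ H.
have [sigma H] := edd_sched E; exists sigma; apply/forall_inP => j jS; exact: H.
Qed.

Lemma sum_split n (S T : {set 'I_n}) (P : pred 'I_n) (F : 'I_n -> nat) :
  (forall k, k \in S -> k \in T = false) ->
  \sum_(k in S :|: T | P k) F k = \sum_(k in S | P k) F k + \sum_(k in T | P k) F k.
Proof.
move=> dis; rewrite (bigID (fun k => k \in S)) /=; congr addn; apply: eq_bigl => k;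
  rewrite !inE; case: (boolP (k \in S)) => kS /=; rewrite ?andbT ?andbF ?orbF //.
by rewrite dis.
Qed.

Lemma bigmax_wit (I : finType) (P : pred I) (f : I -> nat) i0 :
  P i0 -> exists2 i, P i & \max_(i | P i) f i = f i.
Proof.
move=> Pi0; have : 0 < #|P| by apply/card_gt0P; exists i0.
by move=> /(eq_bigmax_cond f) [i Pi E]; exists i.
Qed.

Lemma eddP n (p d : 'I_n -> nat) (S : {set 'I_n}) :
  (forall D, \sum_(k in S | d k <= D) p k <= D) -> edd p d S.
Proof. by move=> H; apply/forall_inP => j _; exact: H. Qed.

Definition F n (p w d : 'I_n -> nat) (e l : nat) : nat :=
  \max_(S : {set 'I_n} | edd p d S && [forall j in S, d j <= e] && (\sum_(j in S) p j <= l))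
    \sum_(j in S) w j.

Definition inv n (p w d : 'I_n -> nat) (e : nat) (A : seq nat) : Prop :=
  size A = e.+1 /\ forall l, l <= e -> nth 0 A l = F p w d e l.

Lemma F_wit n (p w d : 'I_n -> nat) e l : exists2 S : {set 'I_n},
  edd p d S && [forall j in S, d j <= e] && (\sum_(j in S) p j <= l) &
  F p w d e l = \sum_(j in S) w j.
Proof.
apply: (bigmax_wit _ (i0 := set0)).
rewrite big_set0 leq0n andbT; apply/andP; split.
  by apply/forall_inP => j; rewrite inE.
by apply/forall_inP => j; rewrite inE.
Qed.

Lemma dmax_J n (d : 'I_n -> nat) e : (exists j, d j = e) ->
  dmax_of d (jobs_with_due d e) = e.
Proof.
move=> [j0 dj0]; apply/eqP; rewrite eqn_leq; apply/andP; split.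
  by apply/bigmax_leqP => j; rewrite inE => /eqP ->.
by rewrite -{1}dj0; apply: leq_bigmax_cond; rewrite inE dj0.
Qed.

Lemma size_sol n (p w d : 'I_n -> nat) e : (exists j, d j = e) ->
  size (sol_vec p w d (jobs_with_due d e)) = e.+1.
Proof. by move=> H; rewrite size_mkseq dmax_J. Qed.

Lemma nth_sol n (p w d : 'I_n -> nat) e l : (exists j, d j = e) -> l <= e ->
  nth 0 (sol_vec p w d (jobs_with_due d e)) l =
  \max_(S : {set 'I_n} | early_set p d (jobs_with_due d e) S && (\sum_(j in S) p j <= l))
    \sum_(j in S) w j.
Proof. by move=> H le; rewrite nth_mkseq // dmax_J. Qed.

Lemma inv_base n (p w d : 'I_n -> nat) e : (exists j, d j = e) -> (forall j, e <= d j) ->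
  inv p w d e (sol_vec p w d (jobs_with_due d e)).
Proof.
move=> H ge; split; first exact: size_sol.
move=> l le; rewrite nth_sol //; apply: eq_bigl => S.
rewrite early_setE.
have -> : (S \subset jobs_with_due d e) = [forall j in S, d j <= e].
  apply/subsetP/forall_inP => [sub j jS|sub j jS].
    by have := sub j jS; rewrite inE => /eqP ->.
  by rewrite inE eqn_leq sub // ge.
by case: [forall j in S, d j <= e]; case: (edd p d S).
Qed.

Lemma sum_split0 n (S T : {set 'I_n}) (F : 'I_n -> nat) :
  (forall k, k \in S -> k \in T = false) ->
  \sum_(k in S :|: T) F k = \sum_(k in S) F k + \sum_(k in T) F k.
Proof.
move=> dis; rewrite (bigID (fun k => k \in S)) /=; congr addn; apply: eq_bigl => k;
  rewrite !inE; case: (boolP (k \in S)) => kS /=; rewrite ?andbT ?andbF ?orbF //.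
by rewrite dis.
Qed.

Lemma sol_wit n (p w d : 'I_n -> nat) (J : {set 'I_n}) x : exists2 S : {set 'I_n},
  early_set p d J S && (\sum_(j in S) p j <= x) &
  \max_(S : {set 'I_n} | early_set p d J S && (\sum_(j in S) p j <= x)) \sum_(j in S) w j
   = \sum_(j in S) w j.
Proof.
apply: (bigmax_wit _ (i0 := set0)).
rewrite big_set0 leq0n andbT early_setE sub0set /=.
by apply/forall_inP => j; rewrite inE.
Qed.

Lemma inv_step n (p w d : 'I_n -> nat) e e' A :
  inv p w d e A -> e < e' -> (exists j, d j = e') ->
  (forall j, e < d j -> d j <= e' -> d j = e') ->
  inv p w d e' (maxplus_conv A (sol_vec p w d (jobs_with_due d e'))).
Proof.
move=> [sA nA] ee' He' gap; split; first by rewrite size_mkseq size_sol.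
move=> l le; rewrite nth_mkseq ?size_sol // ?ltnS //.
set B := sol_vec p w d (jobs_with_due d e').
apply/eqP; rewrite eqn_leq; apply/andP; split.
- apply/bigmax_leqP => k; rewrite sA ltnS => ke.
  have kl : k <= l by rewrite -ltnS ltn_ord.
  rewrite nA // /B nth_sol //; last exact: leq_trans (leq_subr _ _) le.
  have [S1 /andP[/andP[e1 d1] p1] ->] := F_wit p w d e k.
  have [S2 /andP[es2 p2] ->] := sol_wit p w d (jobs_with_due d e') (l - k).
  move: es2; rewrite early_setE => /andP[sub2 edd2].
  have dS2 : forall j, j \in S2 -> d j = e'.
    by move=> j /(subsetP sub2); rewrite inE => /eqP.
  have dis : forall j, j \in S1 -> j \in S2 = false.
    move=> j jS1; apply/negP => /dS2 dj.
    by have := forall_inP d1 j jS1; rewrite dj leqNgt ee'.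
  rewrite -sum_split0 //; apply: leq_bigmax_cond.
  have pU : \sum_(j in S1 :|: S2) p j <= l.
    rewrite sum_split0 //; lia.
  rewrite pU andbT; apply/andP; split.
    apply: eddP => D; rewrite sum_split //.
    case: (ltnP D e') => De'.
      rewrite [X in _ + X]big1 ?addn0 => [|j /andP[jS2 jD]]; first exact: edd_le.
      by move: jD; rewrite dS2 // leqNgt De'.
    apply: leq_trans _ (leq_trans pU (leq_trans le De')).
    rewrite sum_split0 //; apply: leq_add; apply: sum_sub => j /andP[] //.
  apply/forall_inP => j; rewrite inE => /orP[jS1|jS2].
    exact: leq_trans (forall_inP d1 j jS1) (ltnW ee').
  by rewrite dS2.
- apply/bigmax_leqP => S /andP[/andP[eddS dS] pS].
  pose S1 := [set k in S | d k <= e]; pose S2 := [set k in S | e < d k].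
  have SE : S = S1 :|: S2.
    by apply/setP => k; rewrite !inE -andb_orr ltnNge orbN andbT.
  have dis : forall j, j \in S1 -> j \in S2 = false.
    by move=> j; rewrite !inE => /andP[_ h]; rewrite ltnNge h andbF.
  have pSE : \sum_(j in S) p j = \sum_(j in S1) p j + \sum_(j in S2) p j.
    by rewrite {1}SE sum_split0.
  pose kk := \sum_(j in S1) p j.
  have pS1e : kk <= e.
    apply: leq_trans (edd_le e eddS); apply: eq_leq; apply: eq_bigl => j.
    by rewrite inE.
  have kkl : kk < l.+1 by rewrite ltnS /kk; lia.
  have wSE : \sum_(j in S) w j = \sum_(j in S1) w j + \sum_(j in S2) w j.
    by rewrite {1}SE sum_split0.
  apply: (@leq_trans (\sum_(j in S1) w j + \sum_(j in S2) w j)).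
    by rewrite -wSE.
  apply: (@leq_trans (nth 0 A kk + nth 0 B (l - kk))); last first.
    have kA : kk < size A by rewrite sA ltnS.
    exact: (@leq_bigmax_cond _ (fun i : 'I_l.+1 => i < size A)
             (fun i : 'I_l.+1 => nth 0 A i + nth 0 B (l - i)) (Ordinal kkl) kA).
  apply: leq_add.
    rewrite nA //; apply: leq_bigmax_cond; rewrite leqnn andbT.
    apply/andP; split.
      apply/forall_inP => j; rewrite inE => /andP[jS je].
      apply: leq_trans (forall_inP eddS j jS); apply: eq_leq; apply: eq_bigl => k.
      rewrite inE; case: (boolP (k \in S)) => //= kS.
      by case: (boolP (d k <= d j)) => kj; rewrite ?andbF ?andbT //= ?(leq_trans kj je).
    by apply/forall_inP => j; rewrite inE => /andP[].
  rewrite /B nth_sol //; last exact: leq_trans (leq_subr _ _) le.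
  apply: leq_bigmax_cond; rewrite early_setE.
  have dS2 : forall j, j \in S2 -> d j = e'.
    by move=> j; rewrite inE => /andP[jS ej]; apply: gap => //; exact: forall_inP dS j jS.
  have pS2 : \sum_(j in S2) p j <= l - kk by rewrite leq_subRL /kk; lia.
  rewrite pS2 andbT; apply/andP; split.
    by apply/subsetP => j /dS2 dj; rewrite inE dj.
  apply/forall_inP => j jS2; rewrite dS2 //.
  apply: leq_trans (@sum_sub _ _ (fun k => k \in S2) p _) _.
    by move=> k /andP[].
  apply: leq_trans (leq_trans (leq_subr _ _) le); exact: pS2.
Qed.

Lemma fold_inv n (p w d : 'I_n -> nat) rest : forall e A,
  inv p w d e A -> path ltn e rest -> (forall j, e < d j -> d j \in rest) ->
  (forall x, x \in rest -> exists j, d j = x) ->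
  exists ef, [/\ inv p w d ef
     (foldl (fun A dd => maxplus_conv A (sol_vec p w d (jobs_with_due d dd))) A rest),
     ef \in e :: rest & forall j, d j <= ef].
Proof.
elim: rest => [|e' rest IH] e A Hinv Hpath Hin Hdue /=.
  exists e; split => //; first by rewrite mem_head.
  by move=> j; rewrite leqNgt; apply/negP => /Hin.
move/andP: Hpath => [ee' Hpath'].
have /allP allr := order_path_min ltn_trans Hpath'.
have Hinv' : inv p w d e' (maxplus_conv A (sol_vec p w d (jobs_with_due d e'))).
  apply: (@inv_step _ p w d e e' A Hinv ee'); first exact: (Hdue e' (mem_head _ _)).
  move=> j ej je'; have := Hin j ej; rewrite in_cons => /orP[/eqP //|/allr].
  by rewrite ltnNge je'.
have Hin' : forall j, e' < d j -> d j \in rest.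
  move=> j ej; have := Hin j (ltn_trans ee' ej); rewrite in_cons => /orP[/eqP E|//].
  by move: ej; rewrite E ltnn.
have Hdue' : forall x, x \in rest -> exists j, d j = x.
  by move=> x xr; apply: Hdue; rewrite in_cons xr orbT.
have [ef [H1 H2 H3]] := IH e' _ Hinv' Hpath' Hin' Hdue'.
by exists ef; split => //; rewrite in_cons H2 orbT.
Qed.

Lemma tardy_split n (p w d : 'I_n -> nat) (sigma : {perm 'I_n}) :
  tardy_weight p w d sigma +
  \sum_(j in [set j | completion p [set: 'I_n] sigma j <= d j]) w j = \sum_(j : 'I_n) w j.
Proof.
rewrite [RHS](bigID (fun j => j \in [set j | completion p [set: 'I_n] sigma j <= d j])) /=.
rewrite addnC /tardy_weight; congr addn; apply: eq_bigl => j; rewrite inE ?ltnNge //.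
Qed.

Lemma arith1 a b c f : a + b = c -> b <= f -> c - f <= a.
Proof. lia. Qed.

Lemma arith2 a b c f s : a + b = c -> b <= f -> s <= b -> f = s -> a = c - f.
Proof. lia. Qed.

Theorem lemma11 (n : nat) (p w d : 'I_n -> nat) :
  0 < n ->
  (exists sigma : {perm 'I_n}, tardy_weight p w d sigma = algo p w d) /\
  (forall sigma : {perm 'I_n}, algo p w d <= tardy_weight p w d sigma).
Proof.
move=> n0.
have memdds : forall x, x \in distinct_dues d -> exists j, d j = x.
  move=> x; rewrite /distinct_dues mem_sort mem_undup => /mapP [j _ ->]; by exists j.
have djin : forall j, d j \in distinct_dues d.
  by move=> j; rewrite /distinct_dues mem_sort mem_undup; apply: map_f; rewrite mem_enum.
have srt : sorted ltn (distinct_dues d).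
  by rewrite ltn_sorted_uniq_leq sort_uniq undup_uniq (sort_sorted leq_total).
have Halgo : algo p w d = \sum_j w j - nth 0
   (foldl (fun A dd => maxplus_conv A (sol_vec p w d (jobs_with_due d dd)))
      (sol_vec p w d (jobs_with_due d (head 0 (distinct_dues d)))) (behead (distinct_dues d)))
   (\max_(j : 'I_n) d j) by [].
move: memdds djin srt Halgo.
case: (distinct_dues d) => [|e0 rest] memdds djin srt Halgo.
  by have := djin (Ordinal n0).
have /allP allr := order_path_min ltn_trans srt.
have ge0 : forall j, e0 <= d j.
  move=> j; have := djin j; rewrite in_cons => /orP[/eqP -> //|/allr]; exact: ltnW.
have base := inv_base p w (memdds e0 (mem_head _ _)) ge0.
have Hin : forall j, e0 < d j -> d j \in rest.
  move=> j ej; have := djin j; rewrite in_cons => /orP[/eqP E|//].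
  by move: ej; rewrite E ltnn.
have Hdue : forall x, x \in rest -> exists j, d j = x.
  by move=> x xr; apply: memdds; rewrite in_cons xr orbT.
have [ef [[_ Hnth] efin dle]] := fold_inv base srt Hin Hdue.
have Mef : \max_(j : 'I_n) d j = ef.
  apply/eqP; rewrite eqn_leq; apply/andP; split; first by apply/bigmax_leqP.
  by have [j1 <-] := memdds ef efin; apply: leq_bigmax.
rewrite /= Mef Hnth // in Halgo.
rewrite Halgo.
have Ebound : forall sigma : {perm 'I_n},
    \sum_(j in [set j | completion p [set: 'I_n] sigma j <= d j]) w j <= F p w d ef ef.
  move=> sigma; apply: leq_bigmax_cond.
  have eddE : edd p d [set j | completion p [set: 'I_n] sigma j <= d j].
    apply: (@early_edd _ p d [set: 'I_n] _ sigma (subsetT _)) => j; by rewrite inE.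
  rewrite eddE /=; apply/andP; split; first by apply/forall_inP => j _.
  apply: leq_trans (edd_le ef eddE); apply: eq_leq; apply: eq_bigl => j.
  by rewrite dle andbT.
split; last first.
  move=> sigma; exact: (arith1 (tardy_split p w d sigma) (Ebound sigma)).
have [S /andP[/andP[eddS _] _] FS] := F_wit p w d ef ef.
have [sigma Hs] := edd_sched eddS.
exists sigma.
apply: (arith2 (tardy_split p w d sigma) (Ebound sigma) _ FS).
apply: sum_sub => j jS; rewrite inE; exact: Hs.
Qed.
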